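(* There is a context-free language $L$ such that ${\rm pssr}(L)$ is not context-free; for instance $L=\{0^m1^m2^n3^n : m,n\ge1\}$.
   Context: For words $x=a_1\cdots a_n$, $y=b_1\cdots b_n$ of the same length, the perfect shuffle is $x\,\text{sh}\,y=a_1b_1a_2b_2\cdots a_nb_n$. $x^R$ denotes the reversal of $x$. For a language $L$, ${\rm pssr}(L)=\{x\,\text{sh}\,x^R : x\in L\}$. *)

(* Defs.v *)
From Stdlib Require Import Relations List.
From mathcomp Require Import all_boot.
Set Implicit Arguments. Unset Strict Implicit. Unset Printing Implicit Defensive.

Definition language (T : Type) := seq T -> Prop.

Record cfg (T : Type) := CFG {
  nonterm : Type;
  start : nonterm;
  rules : seq (nonterm * seq (nonterm + T))
}.

Definition cfg_step (T : Type) (G : cfg T) (u v : seq (nonterm G + T)) : Prop :=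
  exists (l r : seq (nonterm G + T)) (A : nonterm G) (rhs : seq (nonterm G + T)),
    List.In (A, rhs) (rules G) /\ u = l ++ inl A :: r /\ v = l ++ rhs ++ r.

Definition cfg_derives (T : Type) (G : cfg T) :=
  clos_refl_trans _ (@cfg_step T G).

Definition cfg_lang (T : Type) (G : cfg T) : language T :=
  fun w => @cfg_derives T G [:: inl (start G)] (map inr w).

Definition context_free (T : Type) (L : language T) : Prop :=
  exists G : cfg T, forall w, L w <-> cfg_lang G w.

Definition perfect_shuffle (T : Type) (x y : seq T) : seq T :=
  flatten (map (fun p => [:: p.1; p.2]) (zip x y)).

Definition pssr (T : Type) (L : language T) : language T :=
  fun w => exists x, L x /\ w = perfect_shuffle x (rev x).

Definition L0 : language nat :=
  fun w => exists m n, 1 <= m /\ 1 <= n /\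
    w = nseq m 0 ++ nseq m 1 ++ nseq n 2 ++ nseq n 3.

(* Main.v *)
Require Import Defs.
From Stdlib Require Import Relations List Classical.
From mathcomp Require Import all_boot zify.
Set Implicit Arguments. Unset Strict Implicit. Unset Printing Implicit Defensive.
Arguments cfg_step {T} G u v.
Arguments cfg_derives {T} G _ _.
Arguments cfg_lang {T} G w.

Inductive dersP (S T : Type) (P : S -> seq T -> Prop) : seq S -> seq T -> Prop :=
| dP_nil : dersP P [::] [::]
| dP_cons s ss w1 w2 : P s w1 -> dersP P ss w2 -> dersP P (s :: ss) (w1 ++ w2).

Fixpoint der (T : Type) (G : cfg T) (n : nat) (s : nonterm G + T) (w : seq T) : Prop :=
  match n with
  | 0 => exists t, s = inr t /\ w = [:: t]
  | n'.+1 => (exists t, s = inr t /\ w = [:: t]) \/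
      exists A rhs, s = inl A /\ List.In (A, rhs) (rules G) /\ dersP (@der T G n') rhs w
  end.
Arguments der {T} G n s w.

Lemma dP_cons' S T (P : S -> seq T -> Prop) s ss w1 w2 w :
  P s w1 -> dersP P ss w2 -> w = w1 ++ w2 -> dersP P (s :: ss) w.
Proof. by move=> H1 H2 ->; apply: dP_cons. Qed.

Lemma dersP_mono S T (P Q : S -> seq T -> Prop) ss w :
  (forall s w, P s w -> Q s w) -> dersP P ss w -> dersP Q ss w.
Proof. move=> HPQ; elim=> [|s ss' w1 w2 H1 _ IH]; [exact: dP_nil | exact: dP_cons (HPQ _ _ H1) IH]. Qed.

Lemma dersP_cat S T (P : S -> seq T -> Prop) a b w1 w2 :
  dersP P a w1 -> dersP P b w2 -> dersP P (a ++ b) (w1 ++ w2).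
Proof.
move=> H; elim: H w2 => [|s ss u1 u2 H1 _ IH] w2 H2 //=.
rewrite -catA; exact: dP_cons H1 (IH _ H2).
Qed.

Lemma dersP_nil_inv S T (P : S -> seq T -> Prop) w : dersP P [::] w -> w = [::].
Proof. by move=> H; inversion H. Qed.

Lemma dersP_cons_inv S T (P : S -> seq T -> Prop) s ss w :
  dersP P (s :: ss) w -> exists w1 w2, w = w1 ++ w2 /\ P s w1 /\ dersP P ss w2.
Proof. move=> H; inversion H; subst; by exists w1, w2. Qed.

Lemma dersP_cat_inv S T (P : S -> seq T -> Prop) a b w :
  dersP P (a ++ b) w -> exists w1 w2, w = w1 ++ w2 /\ dersP P a w1 /\ dersP P b w2.
Proof.
elim: a w => [|s a IH] w /= H.
  by exists [::], w; split => //; split => //; exact: dP_nil.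
have [w1 [w2 [-> [H1 H2]]]] := dersP_cons_inv H.
have [u1 [u2 [-> [Hu1 Hu2]]]] := IH _ H2.
exists (w1 ++ u1), u2; split; first by rewrite catA.
by split => //; exact: dP_cons.
Qed.

Lemma der_mono T (G : cfg T) n s w : der G n s w -> der G n.+1 s w.
Proof.
elim: n s w => [|n IH] s w /=; first by left.
case=> [H|[A [rhs [E [Hin H]]]]]; first by left.
right; exists A, rhs; split => //; split => //.
exact: dersP_mono IH H.
Qed.

Lemma der_le T (G : cfg T) n m s w : n <= m -> der G n s w -> der G m s w.
Proof.
move=> /subnKC <-; elim: (m - n) => [|k IH]; first by rewrite addn0.
by move=> H; rewrite addnS; apply: der_mono; apply: IH.
Qed.

Lemma der_inl_inv T (G : cfg T) n A w : der G n (inl A) w ->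
  exists n' rhs, n = n'.+1 /\ List.In (A, rhs) (rules G) /\ dersP (der G n') rhs w.
Proof.
case: n => [|n] /=; first by case=> t [].
case=> [[t []] //|[A' [rhs [[<-] [Hin H]]]]].
by exists n, rhs.
Qed.

Lemma der_inr_inv T (G : cfg T) n t w : der G n (inr t) w -> w = [:: t].
Proof.
case: n => [|n] /=; first by case=> t' [[->]].
by case=> [[t' [[->]]]|[A [rhs [] //]]].
Qed.

Definition D T (G : cfg T) s w := exists n, der G n s w.
Arguments D {T} G s w.

Lemma step_back T (G : cfg T) u v w n : cfg_step G u v ->
  dersP (der G n) v w -> dersP (der G n.+1) u w.
Proof.
move=> [l [r [A [rhs [Hin [-> ->]]]]]] H.
have [w1 [w23 [-> [H1 H23]]]] := dersP_cat_inv H.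
have [w2 [w3 [-> [H2 H3]]]] := dersP_cat_inv H23.
apply: dersP_cat; first exact: dersP_mono (@der_mono _ G n) H1.
apply: dP_cons; last exact: dersP_mono (@der_mono _ G n) H3.
right; exists A, rhs; split => //.
Qed.

Lemma derives_back T (G : cfg T) u v : cfg_derives G u v ->
  forall w, (exists n, dersP (der G n) v w) -> exists n, dersP (der G n) u w.
Proof.
elim=> {u v} [u v Hs|u|u v z _ IH1 _ IH2] w Hw //.
  by have [n Hn] := Hw; exists n.+1; exact: step_back Hs Hn.
by apply: IH1; apply: IH2.
Qed.

Lemma lang_der T (G : cfg T) w : cfg_lang G w -> D G (inl (start G)) w.
Proof.
move=> H.
have [|n Hn] := derives_back H (w := w).
  exists 0; elim: w {H} => [|t w IH] /=; first exact: dP_nil.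
  by apply: (dP_cons' (w1 := [:: t])) IH _ => //; exists t.
have [w1 [w2 [-> [H1 H2]]]] := dersP_cons_inv Hn.
by rewrite (dersP_nil_inv H2) cats0; exists n.
Qed.

Lemma derives_ctx T (G : cfg T) l r u v : cfg_derives G u v ->
  cfg_derives G (l ++ u ++ r) (l ++ v ++ r).
Proof.
elim=> {u v} [u v [l' [r' [A [rhs [Hin [-> ->]]]]]]|u|u v z _ IH1 _ IH2].
- apply: rt_step; exists (l ++ l'), (r' ++ r), A, rhs; split => //.
  by rewrite -!catA /=.
- exact: rt_refl.
- exact: rt_trans IH1 IH2.
Qed.

Lemma derives_cat T (G : cfg T) a a' b b' : cfg_derives G a a' -> cfg_derives G b b' ->
  cfg_derives G (a ++ b) (a' ++ b').
Proof.
move=> Ha Hb; apply: rt_trans (derives_ctx [::] b Ha) _ => /=.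
have := derives_ctx a' [::] Hb; by rewrite !cats0.
Qed.

Lemma der_derives T (G : cfg T) n : forall s w, der G n s w -> cfg_derives G [:: s] (map inr w).
Proof.
elim: n => [|n IH] s w /=.
  by case=> t [-> ->]; exact: rt_refl.
case=> [[t [-> ->]]|[A [rhs [-> [Hin H]]]]]; first exact: rt_refl.
apply: rt_trans (_ : cfg_derives G _ rhs) _.
  apply: rt_step; exists [::], [::], A, rhs; split => //; by rewrite cats0.
elim: H => [|s1 ss1 w1 w2 H1 _ IH2]; first exact: rt_refl.
rewrite map_cat; exact: (derives_cat (a := [:: s1]) (IH _ _ H1) IH2).
Qed.

Lemma D_lang T (G : cfg T) w : D G (inl (start G)) w -> cfg_lang G w.
Proof. by case=> n Hn; exact: der_derives Hn. Qed.

Lemma maxchild S T (P : S -> seq T -> Prop) ss w : dersP P ss w -> 0 < size ss ->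
  exists ssl s ssr wl wi wr, ss = ssl ++ s :: ssr /\ w = wl ++ wi ++ wr /\
    dersP P ssl wl /\ P s wi /\ dersP P ssr wr /\ size w <= size ss * size wi.
Proof.
elim=> [//|s ss0 w1 w2 H1 H2 IH] _.
case: ss0 H2 IH => [|s' ss'] H2 IH.
  rewrite (dersP_nil_inv H2).
  exists [::], s, [::], [::], w1, [::]; do 5 (split; first by [|rewrite ?cats0|exact: dP_nil]).
  by rewrite cats0 /= mul1n.
have [ssl [s0 [ssr [wl [wi [wr [E1 [E2 [Hl [Hi [Hr Hs]]]]]]]]]]] := IH isT.
case: (leqP (size wi) (size w1)) => Hc.
  exists [::], s, (s' :: ss'), [::], w1, w2; do 5 (split; first by [|exact: dP_nil]).
  move: Hs; rewrite /= size_cat; set k := size ss'; nia.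
exists (s :: ssl), s0, ssr, (w1 ++ wl), wi, wr.
split; first by rewrite E1.
split; first by rewrite E2 !catA.
split; first exact: dP_cons.
do 2 (split => //).
move: Hs; rewrite /= size_cat; set k := size ss'; nia.
Qed.

Definition bb T (G : cfg T) := foldr (fun r acc => maxn (size r.2) acc) 1 (rules G).
Definition NT T (G : cfg T) := List.map fst (rules G).
Definition KK T (G : cfg T) := length (NT G).

Lemma bb_gt0 T (G : cfg T) : 0 < bb G.
Proof. rewrite /bb; elim: (rules G) => //= r rs IH; by rewrite leq_max IH orbT. Qed.

Lemma rule_le_bb T (G : cfg T) A rhs : List.In (A, rhs) (rules G) -> size rhs <= bb G.
Proof.
rewrite /bb; elim: (rules G) => //= r rs IH [->|H]; first by rewrite leq_max leqnn.
by rewrite leq_max IH ?orbT.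
Qed.

Lemma rule_NT T (G : cfg T) A rhs : List.In (A, rhs) (rules G) -> List.In A (NT G).
Proof. move=> H; exact: (in_map fst _ _ H). Qed.

Definition Ctx T (G : cfg T) A1 B u0 z0 :=
  forall t, D G (inl B) t -> D G (inl A1) (u0 ++ t ++ z0).
Definition Goal T (G : cfg T) A1 (w1 : seq T) := exists u v x y z,
  w1 = u ++ v ++ x ++ y ++ z /\ v ++ y <> [::] /\ D G (inl A1) (u ++ x ++ z).
Arguments Ctx {T} G A1 B u0 z0.
Arguments Goal {T} G A1 w1.

Lemma child_repl T (G : cfg T) n A ssl s ssr wl wr t :
  List.In (A, ssl ++ s :: ssr) (rules G) -> dersP (der G n) ssl wl ->
  dersP (der G n) ssr wr -> D G s t -> D G (inl A) (wl ++ t ++ wr).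
Proof.
move=> Hin Hl Hr HD; destruct HD as [m Hm]; exists (maxn n m).+1; right; exists A, (ssl ++ s :: ssr).
split => //; split => //.
apply: dersP_cat; first exact: dersP_mono (fun s w => der_le (leq_maxl n m)) Hl.
apply: dP_cons; first exact: der_le (leq_maxr n m) Hm.
exact: dersP_mono (fun s w => der_le (leq_maxl n m)) Hr.
Qed.

Lemma size_ge2_inl T (G : cfg T) n s w : der G n s w -> 1 < size w ->
  exists A', s = inl A'.
Proof.
destruct s as [A0|t]; first by exists A0.
by move=> H; rewrite (der_inr_inv H).
Qed.

Lemma expn_ge1 b j : 0 < b -> 0 < b ^ j.
Proof. by move=> Hb; rewrite expn_gt0 Hb. Qed.

Lemma claim T (G : cfg T) n : forall A w, der G n (inl A) w ->
  forall A1 w1 u0 z0 (seen : list (nonterm G)) j,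
  w1 = u0 ++ w ++ z0 -> Ctx G A1 A u0 z0 -> NoDup seen -> incl seen (NT G) ->
  bb G ^ j < size w -> KK G <= length seen + j ->
  (forall B, List.In B seen -> forall u' x z', w = u' ++ x ++ z' ->
      Ctx G A B u' z' -> D G (inl B) x -> Goal G A1 w1) ->
  Goal G A1 w1.
Proof.
elim: n => [|n IH] A w Hd A1 w1 u0 z0 seen j Ew1 Hctx Hnd Hinc Hsz HK H.
  by case: Hd => t [].
case: (classic (List.In A seen)) => Hin.
  apply: (H A Hin [::] w [::]); first by rewrite cats0.
    by move=> t; rewrite cats0.
  by exists n.+1.
have [n' [rhs [[En] [Hr Hds]]]] := der_inl_inv Hd.
subst n'.
have Hb := bb_gt0 G.
have Hj1 := expn_ge1 j Hb.
have Hpos : 0 < size rhs.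
  case: rhs Hr Hds => // _ /dersP_nil_inv Ew; move: Hsz; rewrite Ew /=; lia.
have [ssl [s [ssr [wl [wi [wr [Er [Ew [Hl [Hi [Hrr Hs]]]]]]]]]]] := maxchild Hds Hpos.
have Hs' : size w <= bb G * size wi := leq_trans Hs (leq_mul (rule_le_bb Hr) (leqnn _)).
subst rhs.
have Hrepl : forall t, D G s t -> D G (inl A) (wl ++ t ++ wr) :=
  fun t => child_repl Hr Hl Hrr.
case Eb: (wl ++ wr) => [|c cs].
- have [El Er'] : wl = [::] /\ wr = [::] by destruct wl, wr.
  subst wl wr; rewrite /= cats0 in Ew; subst w.
  have Hge : 1 < size wi by lia.
  have [A' EA'] := size_ge2_inl Hi Hge.
  subst s.
  apply: (IH A' wi Hi A1 w1 u0 z0 seen j) => //.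
    move=> t Ht; apply: Hctx; have := Hrepl t Ht; by rewrite /= cats0.
  move=> B HB u' x z' Ewi Hc Hx; apply: (H B HB u' x z' Ewi) => // t Ht.
  have := Hrepl _ (Hc t Ht); by rewrite /= cats0.
- case: j Hsz HK Hj1 => [|j] Hsz HK Hj1.
    exfalso.
    have := NoDup_incl_length (NoDup_cons _ Hin Hnd) (incl_cons (rule_NT Hr) Hinc).
    rewrite /KK in HK; simpl; lia.
  have Hwi : bb G ^ j < size wi.
    rewrite -(ltn_pmul2l Hb); rewrite expnS in Hsz; exact: leq_trans Hsz Hs'.
  have Hj0 := expn_ge1 j Hb.
  have Hge : 1 < size wi by lia.
  have [A' EA'] := size_ge2_inl Hi Hge.
  subst s.
  apply: (IH A' wi Hi A1 w1 (u0 ++ wl) (wr ++ z0) (A :: seen) j).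
  + by rewrite Ew1 Ew -!catA.
  + move=> t Ht; have := Hctx _ (Hrepl t Ht); by rewrite -!catA.
  + exact: NoDup_cons.
  + exact: incl_cons (rule_NT Hr) Hinc.
  + done.
  + simpl; lia.
  + move=> B [<-|HB] u' x z' Ewi Hc Hx.
    * exists u0, (wl ++ u'), x, (z' ++ wr), z0.
      split; first by rewrite Ew1 Ew Ewi -!catA.
      split; last exact: Hctx _ Hx.
      move/(congr1 size); have := congr1 size Eb; rewrite !size_cat /=; lia.
    * apply: (H B HB (wl ++ u') x (z' ++ wr)).
      - by rewrite Ew Ewi -!catA.
      - move=> t Ht; have := Hrepl _ (Hc t Ht); by rewrite -!catA.
      - exact Hx.
Qed.

Lemma outer T (G : cfg T) n : forall A w, der G n (inl A) w -> bb G ^ KK G < size w ->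
  exists u v x y z, w = u ++ v ++ x ++ y ++ z /\ v ++ y <> [::] /\
    size (v ++ x ++ y) <= bb G ^ (KK G).+1 /\ D G (inl A) (u ++ x ++ z).
Proof.
elim: n => [|n IH] A w Hd Hsz; first by case: Hd => t [].
have [n' [rhs [[En] [Hr Hds]]]] := der_inl_inv Hd.
subst n'.
have Hb := bb_gt0 G.
have Hj1 := expn_ge1 (KK G) Hb.
have Hpos : 0 < size rhs.
  case: rhs Hr Hds => // _ /dersP_nil_inv Ew; move: Hsz; rewrite Ew /=; lia.
have [ssl [s [ssr [wl [wi [wr [Er [Ew [Hl [Hi [Hrr Hs]]]]]]]]]]] := maxchild Hds Hpos.
have Hs' : size w <= bb G * size wi := leq_trans Hs (leq_mul (rule_le_bb Hr) (leqnn _)).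
subst rhs.
case: (leqP (size wi) (bb G ^ KK G)) => Hc.
- have Hw : size w <= bb G ^ (KK G).+1.
    by rewrite expnS; exact: leq_trans Hs' (leq_mul (leqnn _) Hc).
  have [u [v [x [y [z [Ew' [Hne HD]]]]]]] :=
    @claim T G n.+1 A w Hd A w [::] [::] [::] (KK G) (esym (cats0 w))
      (fun t H => (eq_ind _ (fun q => D G (inl A) q) H _ (esym (cats0 t))))
      (NoDup_nil _) (incl_nil_l _) Hsz (leqnn _) (fun B (HB : List.In B [::]) => match HB with end).
  exists u, v, x, y, z; split => //; split => //; split => //.
  move: Hw; rewrite Ew' !size_cat; lia.
- have Hge : 1 < size wi by lia.
  have [A' EA'] := size_ge2_inl Hi Hge.
  subst s.
  have [u [v [x [y [z [Ewi [Hne [Hsz2 HD]]]]]]]] := IH A' wi Hi Hc.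
  exists (wl ++ u), v, x, y, (z ++ wr).
  split; first by rewrite Ew Ewi -!catA.
  do 2 (split => //).
  have := child_repl Hr Hl Hrr HD; by rewrite -!catA.
Qed.

Lemma pump T (G : cfg T) : exists p, forall w, cfg_lang G w -> p < size w ->
  exists u v x y z, w = u ++ v ++ x ++ y ++ z /\ v ++ y <> [::] /\
    size (v ++ x ++ y) <= p /\ cfg_lang G (u ++ x ++ z).
Proof.
exists (bb G ^ (KK G).+1) => w Hw Hsz.
have [n Hn] := lang_der Hw.
have Hsz' : bb G ^ KK G < size w :=
  leq_ltn_trans (leq_pexp2l (bb_gt0 G) (leqnSn _)) Hsz.
have [u [v [x [y [z [E [Hne [Hs HD]]]]]]]] := outer Hn Hsz'.
exists u, v, x, y, z; do 3 (split => //).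
exact: D_lang.
Qed.

Notation sh := perfect_shuffle.

Lemma sh_cons T (a b : T) x y : sh (a :: x) (b :: y) = a :: b :: sh x y.
Proof. by []. Qed.

Lemma size_sh T (x y : seq T) : size x = size y -> size (sh x y) = size x + size y.
Proof.
elim: x y => [|a x IH] [|b y] //= [E]; rewrite IH //; lia.
Qed.

Lemma take_sh T k (x y : seq T) : size x = size y ->
  take k.*2 (sh x y) = sh (take k x) (take k y).
Proof.
elim: k x y => [|k IH] [|a x] [|b y] //= [E].
by rewrite IH.
Qed.

Lemma sh_inj T (x y x' y' : seq T) : size x = size y -> size x' = size y' ->
  sh x y = sh x' y' -> x = x' /\ y = y'.
Proof.
elim: x y x' y' => [|a x IH] [|b y] [|a' x'] [|b' y'] //= [E] [E'] [-> -> H].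
by have [-> ->] := IH _ _ _ E E' H.
Qed.

Lemma sh_rcons T (x y : seq T) a b : size x = size y ->
  sh (rcons x a) (rcons y b) = rcons (rcons (sh x y) a) b.
Proof. elim: x y => [|c x IH] [|d y] // [E]; by rewrite !rcons_cons !sh_cons IH. Qed.

Lemma rev_sh T (x y : seq T) : size x = size y -> rev (sh x y) = sh (rev y) (rev x).
Proof.
elim: x y => [|a x IH] [|b y] //= [E].
rewrite !rev_cons IH // sh_rcons //; by rewrite !size_rev.
Qed.

Lemma pal T (x : seq T) : rev (sh x (rev x)) = sh x (rev x).
Proof. by rewrite rev_sh ?revK // size_rev. Qed.

Lemma count_take T (a : pred T) k s : count a (take k s) <= count a s.
Proof. by rewrite -{2}(cat_take_drop k s) count_cat leq_addr. Qed.

Lemma L0_count x : L0 x -> exists m n, size x = (m + n).*2 /\ count_mem 0 x = m /\ count_mem 3 x = n.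
Proof.
case=> m [n [_ [_ ->]]]; exists m, n.
rewrite !size_cat !count_cat !size_nseq !count_nseq /=; lia.
Qed.

Lemma not_cf_pssr : ~ context_free (pssr L0).
Proof.
move=> [G HG].
have [p Hp] := pump G.
set P := p.+1.
set x := nseq P 0 ++ nseq P 1 ++ nseq P 2 ++ nseq P 3.
set z := sh x (rev x).
have Hsx : size x = P * 4 by rewrite !size_cat !size_nseq; lia.
have Hsz : size z = P * 8 by rewrite /z size_sh ?size_rev // Hsx; lia.
have Lz : cfg_lang G z.
  by apply/HG; exists x; split => //; exists P, P.
have Hpz : p < size z by rewrite Hsz; lia.
have [u [v [x' [y [w' [Ez [Hne [Hs Hl]]]]]]]] := Hp z Lz Hpz.
have [x2 [Lx2 Ez']] := proj2 (HG _) Hl.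
set z' := u ++ x' ++ w'.
have Hsizes : size z = size z' + size (v ++ y).
  by rewrite Ez /z' !size_cat; lia.
have Hne' : 0 < size (v ++ y) by case: (v ++ y) Hne.
have Etake : take P.*2 z' = take P.*2 z.
  case: (leqP P.*2 (size u)) => Hu.
    by rewrite /z' Ez !takel_cat.
  have Hw : P.*2 <= size w'.
    move: Hsz Hs; rewrite Ez !size_cat; lia.
  have Pz : rev z = z by rewrite /z pal.
  have Pz' : rev z' = z' by rewrite /z' Ez' pal.
  rewrite -Pz -Pz' /z' Ez.
  have -> : u ++ x' ++ w' = (u ++ x') ++ w' by rewrite catA.
  have -> : u ++ v ++ x' ++ y ++ w' = (u ++ v ++ x' ++ y) ++ w' by rewrite -!catA.
  rewrite !rev_cat.
  by rewrite !takel_cat ?size_rev.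
have Ex1 : take P x = nseq P 0 by rewrite /x takel_cat ?size_nseq // take_oversize ?size_nseq.
have Ex2 : take P (rev x) = nseq P 3.
  by rewrite /x !rev_cat !rev_nseq -!catA takel_cat ?size_nseq // take_oversize ?size_nseq.
move: Etake; rewrite /z' Ez' /z !take_sh ?size_rev // Ex1 Ex2.
move=> /sh_inj [].
- by rewrite !size_take size_rev.
- by rewrite !size_nseq.
move=> H0 H3.
have [m [n [Hsx2 [C0 C3]]]] := L0_count Lx2.
have Hm : P <= m.
  by have := count_take (pred1 0) P x2; rewrite H0 count_nseq /= mul1n C0.
have Hn : P <= n.
  by have := count_take (pred1 3) P (rev x2); rewrite H3 count_nseq /= mul1n count_rev C3.
have : size z' = (size x2).*2 by rewrite /z' Ez' size_sh ?size_rev //; lia.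
move: Hsizes Hne'; rewrite Hsz Hsx2; lia.
Qed.

Definition g0rules : seq (nat * seq (nat + nat)) :=
  [:: (0, [:: inl 1; inl 2]); (1, [:: inr 0; inl 1; inr 1]); (1, [:: inr 0; inr 1]);
      (2, [:: inr 2; inl 2; inr 3]); (2, [:: inr 2; inr 3])].
Definition G0 : cfg nat := @CFG nat nat 0 g0rules.

Lemma der_term T (G : cfg T) n t : der G n (inr t) [:: t].
Proof. case: n => [|n] /=; [by exists t | by left; exists t]. Qed.

Lemma nseqSr T n (a : T) : nseq n.+1 a = nseq n a ++ [:: a].
Proof. by elim: n => //= n ->. Qed.

Lemma gen_blk A a c : List.In (A, [:: inr a; inl A; inr c]) g0rules ->
  List.In (A, [:: inr a; inr c]) g0rules ->
  forall m, der G0 m.+1 (inl A) (nseq m.+1 a ++ nseq m.+1 c).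
Proof.
move=> H1 H2; elim=> [|m IH].
  right; exists A, [:: inr a; inr c]; split => //; split => //.
  apply: (dP_cons' (w1 := [:: a])); first exact: der_term.
  apply: (dP_cons' (w1 := [:: c])); first exact: der_term.
  - exact: dP_nil.
  - by [].
  - by [].
right; exists A, [:: inr a; inl A; inr c]; split => //; split => //.
apply: (dP_cons' (w1 := [:: a])); first exact: der_term.
apply: (dP_cons' IH).
apply: (dP_cons' (w1 := [:: c])); first exact: der_term.
- exact: dP_nil.
- by [].
- by [].
- by rewrite cats0 /= -catA /= -nseqSr.
Qed.

Lemma inv_blk A a c : (A = 1 /\ a = 0 /\ c = 1) \/ (A = 2 /\ a = 2 /\ c = 3) ->
  forall n w, der G0 n (inl A) w -> exists m, w = nseq m.+1 a ++ nseq m.+1 c.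
Proof.
move=> HA; elim=> [|n IH] w /der_inl_inv [n' [rhs [En [Hin H]]]]; first by [].
case: En => En; subst n'.
destruct Hin as [E|[E|[E|[E|[E|[]]]]]]; inversion E; subst; clear E;
  try (by case: HA => [[]|[]]).
- have [w1 [w2 [-> [H1 H2]]]] := dersP_cons_inv H.
  have [w3 [w4 [-> [H3 H4]]]] := dersP_cons_inv H2.
  have [w5 [w6 [-> [H5 H6]]]] := dersP_cons_inv H4.
  rewrite (dersP_nil_inv H6) (der_inr_inv H1) (der_inr_inv H5).
  have [m ->] := IH _ H3.
  case: HA => [[_ [-> ->]]|[]] //.
  by exists m.+1; rewrite cats0 /= -catA /= -nseqSr.
- have [w1 [w2 [-> [H1 H2]]]] := dersP_cons_inv H.
  have [w5 [w6 [-> [H5 H6]]]] := dersP_cons_inv H2.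
  rewrite (dersP_nil_inv H6) (der_inr_inv H1) (der_inr_inv H5).
  case: HA => [[_ [-> ->]]|[]] //.
  by exists 0.
- have [w1 [w2 [-> [H1 H2]]]] := dersP_cons_inv H.
  have [w3 [w4 [-> [H3 H4]]]] := dersP_cons_inv H2.
  have [w5 [w6 [-> [H5 H6]]]] := dersP_cons_inv H4.
  rewrite (dersP_nil_inv H6) (der_inr_inv H1) (der_inr_inv H5).
  have [m ->] := IH _ H3.
  case: HA => [[]|[_ [-> ->]]] //.
  by exists m.+1; rewrite cats0 /= -catA /= -nseqSr.
- have [w1 [w2 [-> [H1 H2]]]] := dersP_cons_inv H.
  have [w5 [w6 [-> [H5 H6]]]] := dersP_cons_inv H2.
  rewrite (dersP_nil_inv H6) (der_inr_inv H1) (der_inr_inv H5).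
  case: HA => [[]|[_ [-> ->]]] //.
  by exists 0.
Qed.

Lemma cf_L0 : context_free L0.
Proof.
exists G0 => w; split.
  case=> m [n [Hm [Hn ->]]].
  apply: D_lang => /=.
  case: m Hm => // m _; case: n Hn => // n _.
  have H1 := @gen_blk 1 0 1 (or_intror (or_introl erefl)) (or_intror (or_intror (or_introl erefl))) m.
  have H2 := @gen_blk 2 2 3 (or_intror (or_intror (or_intror (or_introl erefl))))
     (or_intror (or_intror (or_intror (or_intror (or_introl erefl))))) n.
  exists (maxn m.+1 n.+1).+1; right; exists 0, [:: inl 1; inl 2]; split => //; split.
    by left.
  have := dP_cons (der_le (leq_maxl _ _) H1) (dP_cons (der_le (leq_maxr _ _) H2) (@dP_nil _ _ (der G0 (maxn m.+1 n.+1)))).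
  by rewrite cats0 -!catA.
move/lang_der => [k Hk] /=.
have [n' [rhs [En [Hin H]]]] := der_inl_inv Hk.
destruct Hin as [E|[E|[E|[E|[E|[]]]]]]; inversion E; subst; clear E.
have [w1 [w2 [-> [H1 H2]]]] := dersP_cons_inv H.
have [w3 [w4 [-> [H3 H4]]]] := dersP_cons_inv H2.
rewrite (dersP_nil_inv H4) cats0.
have [m ->] := inv_blk (or_introl (conj erefl (conj erefl erefl))) H1.
have [n ->] := inv_blk (or_intror (conj erefl (conj erefl erefl))) H3.
exists m.+1, n.+1; split => //; split => //.
by rewrite -!catA.
Qed.

Theorem mainTheorem7 :
  (exists L : language nat, context_free L /\ ~ context_free (pssr L)) /\
  (context_free L0 /\ ~ context_free (pssr L0)).
Proof.
split; first by exists L0; split; [exact: cf_L0 | exact: not_cf_pssr].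
by split; [exact: cf_L0 | exact: not_cf_pssr].
Qed.
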